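(* Let $N,Q,S\ge 1$ be integers, let $\mathbf{H}\in\mathbb{R}^{Q\times N}$ with $\mathbf{H}\neq\mathbf{0}$, $\mathbf{y}\in\mathbb{R}^Q$, let $\mathbf{V}_0$ be a real matrix with $N$ columns, and for each $s\in\{1,\dots,S\}$ let $P_s\ge1$, $\mathbf{V}_s\in\mathbb{R}^{P_s\times N}$ and $\mathbf{c}_s\in\mathbb{R}^{P_s}$. Let $\Phi:\mathbb{R}^Q\to\mathbb{R}$ and, for every $\delta>0$ and $s\in\{1,\dots,S\}$, $\psi_{s,\delta}:\mathbb{R}\to\mathbb{R}$. For $\delta>0$ define $$F_\delta(\mathbf{x})=\Phi(\mathbf{H}\mathbf{x}-\mathbf{y})+\sum_{s=1}^S\psi_{s,\delta}(\|\mathbf{V}_s\mathbf{x}-\mathbf{c}_s\|)+\|\mathbf{V}_0\mathbf{x}\|^2,\qquad \mathbf{x}\in\mathbb{R}^N.$$ Assume: (i) $\Phi$ is continuous and coercive ($\lim_{\|\mathbf{z}\|\to+\infty}\Phi(\mathbf{z})=+\infty$); (ii) for every $\delta>0$ and every $s\in\{1,\dots,S\}$, $\psi_{s,\delta}$ is continuous and takes nonnegative values; (iii) $\operatorname{Ker}\mathbf{H}\cap\operatorname{Ker}\mathbf{V}_0=\{\mathbf{0}\}$. Then, for every $\delta>0$, (i) $F_\delta$ is coercive, and (ii) the set of minimizers of $F_\delta$ is nonempty and compact.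
   Context: $\|\cdot\|$ denotes the Euclidean norm. *)

(* Defs.v *)
From HB Require Import structures.
From mathcomp Require Import all_boot all_order all_algebra.
From mathcomp Require Import all_classical all_reals all_analysis.
Set Implicit Arguments. Unset Strict Implicit. Unset Printing Implicit Defensive.
Import Order.TTheory GRing.Theory Num.Theory.
Import numFieldNormedType.Exports.
Local Open Scope ring_scope.

Definition enorm (R : realType) (n : nat) (x : 'cV[R]_n) : R :=
  Num.sqrt (\sum_(i < n) (x i 0) ^+ 2).

Definition coercive (R : realType) (n : nat) (f : 'cV[R]_n -> R) : Prop :=
  forall M : R, exists r : R, forall z : 'cV[R]_n, r < enorm z -> M < f z.

Definition argmin_set (R : realType) (n : nat) (f : 'cV[R]_n -> R) : set 'cV[R]_n :=
  [set x | forall z, f x <= f z].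

Definition F_obj (R : realType) (N Q S M0 : nat) (P : 'I_S -> nat)
  (H : 'M[R]_(Q, N)) (y : 'cV[R]_Q) (V0 : 'M[R]_(M0, N))
  (V : forall s : 'I_S, 'M[R]_(P s, N)) (c : forall s : 'I_S, 'cV[R]_(P s))
  (Phi : 'cV[R]_Q -> R) (psi : R -> 'I_S -> R -> R) (delta : R)
  (x : 'cV[R]_N) : R :=
  Phi (H *m x - y) + \sum_(s < S) psi delta s (enorm (V s *m x - c s))
  + enorm (V0 *m x) ^+ 2.

(* Main.v *)
Require Import Defs.
From HB Require Import structures.
From mathcomp Require Import all_boot all_order all_algebra.
From mathcomp Require Import all_classical all_reals all_analysis.
From mathcomp Require Import lra.
Import Order.TTheory GRing.Theory Num.Theory.
Import numFieldNormedType.Exports.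
Local Open Scope ring_scope.
Local Open Scope classical_set_scope.

Lemma lip_cont (R: realType) (U V : normedModType R) (f : U -> V) (K : R) :
  (forall x z, `|f x - f z| <= K * `|x - z|) -> continuous f.
Proof.
move=> Hf x; apply/cvgrPdist_lt => e e0.
have K1 : 0 < `|K| + 1 by rewrite ltr_wpDl.
have ee : 0 < e / (`|K| + 1) by rewrite divr_gt0.
near=> z.
apply: (le_lt_trans (Hf x z)).
have : `|x - z| < e / (`|K|+1) by near: z; apply: cvgr_dist_lt.
rewrite ltr_pdivlMr // => h.
have : K * `|x - z| <= `|K| * `|x - z| by rewrite ler_wpM2r // ler_norm.
have := normr_ge0 (x - z).
nra.
Unshelve. all: by end_near.
Qed.

Lemma mx_entry_le (R : realType) m n (M : 'M[R]_(m,n)) i j : `|M i j| <= `|M|.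
Proof.
have -> : `|M| = mx_norm M by []. rewrite mx_normrE.
by apply/bigmax_geP; right; exists (i, j).
Qed.

Lemma mx_norm_leP (R : realType) m n (M : 'M[R]_(m,n)) b :
  0 <= b -> (forall i j, `|M i j| <= b) -> `|M| <= b.
Proof.
move=> b0 H; have -> : `|M| = mx_norm M by []. rewrite mx_normrE.
by apply/bigmax_leP; split => // -[i j].
Qed.

Definition KM {R : realType} {m n} (M : 'M[R]_(m,n)) : R := \sum_i \sum_j `|M i j|.

Lemma KM_ge0 {R : realType} {m n} (M : 'M[R]_(m,n)) : 0 <= KM M.
Proof. by apply: sumr_ge0 => i _; apply: sumr_ge0. Qed.

Lemma mulmx_norm_le {R : realType} {m n p} (M : 'M[R]_(m,n)) (w : 'M[R]_(n,p)) :
  `|M *m w| <= KM M * `|w|.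
Proof.
apply: mx_norm_leP; first by rewrite mulr_ge0 // KM_ge0.
move=> i k; rewrite mxE.
apply: (le_trans (ler_norm_sum _ _ _)).
apply: (@le_trans _ _ ((\sum_j `|M i j|) * `|w|)).
  rewrite mulr_suml; apply: ler_sum => j _; rewrite normrM.
  by apply: ler_wpM2l => //; apply: mx_entry_le.
apply: ler_wpM2r => //.
rewrite /KM (bigD1 i) //= lerDl.
by apply: sumr_ge0 => i' _; apply: sumr_ge0.
Qed.

Lemma trmx_norm_le (R : realType) m n (M : 'M[R]_(m,n)) : `|M^T| <= `|M|.
Proof.
by apply: mx_norm_leP => // i j; rewrite mxE; apply: mx_entry_le.
Qed.

Lemma trmx_cont (R : realType) m n : continuous (@trmx R m n).
Proof.
apply: (@lip_cont _ _ _ _ 1) => x z; rewrite mul1r -linearB /=.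
exact: trmx_norm_le.
Qed.

Lemma compact_cV (R : realType) n (A : set 'cV[R]_n) b :
  (forall x, A x -> `|x| <= b) -> closed A -> compact A.
Proof.
move=> Ab cA.
pose B := (@trmx R 1 n) @^-1` A.
have cB : compact B.
  apply: bounded_closed_compact.
    exists b; split; first exact: num_real.
    move=> M bM x Bx /=.
    apply: (le_trans _ (ltW bM)).
    apply: (le_trans _ (Ab _ Bx)).
    by rewrite -[X in `|X| <= _]trmxK trmx_norm_le.
  by apply: preimage_closed => // x _; apply: trmx_cont.
have -> : A = (@trmx R 1 n) @` B.
  apply/seteqP; split => x.
    by move=> Ax; exists x^T; rewrite /B /= ?trmxK.
  by move=> [v Bv <-].
apply: continuous_compact => //.
apply: continuous_subspaceT; exact: trmx_cont.
Qed.

Lemma cont_comp (T U W : topologicalType) (f : T -> U) (g : U -> W) :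
  continuous f -> continuous g -> continuous (fun x => g (f x)).
Proof. by move=> hf hg x; apply: continuous_comp; [apply: hf | apply: hg]. Qed.

Lemma enorm_ge0 (R : realType) n (x : 'cV[R]_n) : 0 <= enorm x.
Proof. exact: sqrtr_ge0. Qed.

Lemma mx_le_enorm {R : realType} {n} (x : 'cV[R]_n) : `|x| <= enorm x.
Proof.
apply: mx_norm_leP; first exact: enorm_ge0.
move=> i j; rewrite (ord1 j) -sqrtr_sqr /enorm ler_sqrt; last first.
  by apply: sumr_ge0 => k _; rewrite sqr_ge0.
rewrite (bigD1 i) //= lerDl.
by apply: sumr_ge0 => k _; rewrite sqr_ge0.
Qed.

Lemma enorm_le_mx {R : realType} {n} (x : 'cV[R]_n) : enorm x <= n%:R * `|x|.
Proof.
have h0 : 0 <= n%:R * `|x| :> R by rewrite mulr_ge0.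
rewrite -(ger0_norm h0) -sqrtr_sqr /enorm ler_sqrt; last by rewrite sqr_ge0.
apply: (@le_trans _ _ (\sum_(i < n) `|x| ^+ 2)).
  apply: ler_sum => i _.
  rewrite -real_normK ?num_real // -[X in _ <= X]real_normK ?num_real // normr_id.
  rewrite lerXn2r // ?nnegrE //; apply: mx_entry_le.
rewrite sumr_const card_ord -[X in X <= _]mulr_natl exprMn ler_wpM2r ?sqr_ge0 //.
rewrite -natrX ler_nat; case: (n) => // k.
by rewrite expnS leq_pmulr.
Qed.

Lemma enorm_cont (R : realType) n : continuous (@enorm R n).
Proof.
rewrite /enorm.
apply: (@cont_comp _ _ _ (fun x : 'cV[R]_n => \sum_(i < n) x i 0 ^+ 2) (@Num.sqrt R));
  last exact: sqrt_continuous.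
apply: (@continuous_big _ _ +%R 0 predT add_continuous _ _ (fun i (x : 'cV[R]_n) => x i 0 ^+ 2)).
move=> i _ x.
have ce : continuous (fun z : 'cV[R]_n => z i 0).
  apply: (@lip_cont _ _ _ _ 1) => a b; rewrite mul1r.
  have -> : a i 0 - b i 0 = (a - b) i 0 by rewrite !mxE.
  exact: mx_entry_le.
rewrite /=; under eq_fun do rewrite expr2.
by apply: continuousM; apply: ce.
Qed.

Lemma affine_cont {R : realType} {m n} (M : 'M[R]_(m,n)) (c : 'cV[R]_m) :
  continuous (fun x : 'cV[R]_n => M *m x - c).
Proof.
apply: (@lip_cont _ _ _ _ (KM M)) => x z.
have -> : M *m x - c - (M *m z - c) = M *m (x - z).
  by rewrite mulmxBr opprB addrA subrK.
exact: mulmx_norm_le.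
Qed.

Lemma left_inv {R: realType} {N Q M0} (H : 'M[R]_(Q,N)) (V0 : 'M[R]_(M0,N)) :
  (forall x : 'cV[R]_N, H *m x = 0 -> V0 *m x = 0 -> x = 0) ->
  exists K : R, 0 <= K /\ forall x : 'cV_N, `|x| <= K * (`|H *m x| + `|V0 *m x|).
Proof.
move=> hk.
pose A := col_mx H V0.
have rf : row_free A^T.
  apply: inj_row_free => v hv.
  have : A *m v^T = 0 by rewrite -(trmxK (A *m v^T)) trmx_mul trmxK hv trmx0.
  rewrite mul_col_mx => /eqP; rewrite col_mx_eq0 => /andP[/eqP h1 /eqP h2].
  by apply: trmx_inj; rewrite (hk _ h1 h2) trmx0.
case/row_freeP: rf => B hB.
pose L : 'M[R]_(N, Q + M0) := B^T.
have hL : L *m A = 1%:M by rewrite -(trmxK (L *m A)) trmx_mul trmxK hB trmx1.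
exists (KM (@lsubmx R N Q M0 L) + KM (@rsubmx R N Q M0 L)); split; first by rewrite addr_ge0 // KM_ge0.
move=> x.
have ex : x = lsubmx L *m (H *m x) + rsubmx L *m (V0 *m x).
  by rewrite -mul_row_col hsubmxK -mul_col_mx -/A mulmxA hL mul1mx.
rewrite {1}ex.
apply: (le_trans (ler_normD _ _)).
have h1 := mulmx_norm_le (lsubmx L) (H *m x).
have h2 := mulmx_norm_le (rsubmx L) (V0 *m x).
have k1 := KM_ge0 (lsubmx L).
have k2 := KM_ge0 (rsubmx L).
have n1 := normr_ge0 (H *m x).
have n2 := normr_ge0 (V0 *m x).
nra.
Qed.

Lemma F_cont (R : realType) (N Q S M0 : nat) (P : 'I_S -> nat)
  (H : 'M[R]_(Q, N)) (y : 'cV[R]_Q) (V0 : 'M[R]_(M0, N))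
  (V : forall s : 'I_S, 'M[R]_(P s, N)) (c : forall s : 'I_S, 'cV[R]_(P s))
  (Phi : 'cV[R]_Q -> R) (psi : R -> 'I_S -> R -> R) delta :
  continuous Phi -> (forall s, continuous (psi delta s)) ->
  continuous (@F_obj R N Q S M0 P H y V0 V c Phi psi delta).
Proof.
move=> cP cp; rewrite /F_obj.
have c1 : continuous (fun x => Phi (H *m x - y)).
  exact: (@cont_comp _ _ _ (fun x : 'cV[R]_N => H *m x - y) Phi (affine_cont H y) cP).
have c2 : continuous (fun x : 'cV[R]_N => \sum_(s < S) psi delta s (enorm (V s *m x - c s))).
  apply: (@continuous_big _ _ +%R 0 predT add_continuous _ _
    (fun s (x : 'cV[R]_N) => psi delta s (enorm (V s *m x - c s)))) => s _.
  apply: (@cont_comp _ _ _ (fun x : 'cV[R]_N => enorm (V s *m x - c s)) _ _ (cp s)).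
  exact: (@cont_comp _ _ _ (fun x : 'cV[R]_N => V s *m x - c s) _ (affine_cont (V s) (c s)) (@enorm_cont R (P s))).
have ce : continuous (fun x : 'cV[R]_N => enorm (V0 *m x)).
  apply: (@cont_comp _ _ _ (fun x : 'cV[R]_N => V0 *m x) _ _ (@enorm_cont R M0)).
  have := affine_cont V0 0; by under eq_fun do rewrite subr0.
have c3 : continuous (fun x : 'cV[R]_N => enorm (V0 *m x) ^+ 2).
  move=> x; under eq_fun do rewrite expr2.
  exact: (continuousM (ce x) (ce x)).
move=> x.
exact: (continuousD (continuousD (c1 x) (c2 x)) (c3 x)).
Qed.

Theorem proposition1 (R : realType) (N Q S M0 : nat) (P : 'I_S -> nat)
  (H : 'M[R]_(Q, N)) (y : 'cV[R]_Q) (V0 : 'M[R]_(M0, N))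
  (V : forall s : 'I_S, 'M[R]_(P s, N)) (c : forall s : 'I_S, 'cV[R]_(P s))
  (Phi : 'cV[R]_Q -> R) (psi : R -> 'I_S -> R -> R) :
  (1 <= N)%N -> (1 <= Q)%N -> (1 <= S)%N ->
  (forall s, (1 <= P s)%N) ->
  H != 0 ->
  continuous Phi -> coercive Phi ->
  (forall delta : R, 0 < delta -> forall s : 'I_S,
      continuous (psi delta s) /\ (forall t : R, 0 <= psi delta s t)) ->
  (forall x : 'cV[R]_N, H *m x = 0 -> V0 *m x = 0 -> x = 0) ->
  forall delta : R, 0 < delta ->
    coercive (@F_obj R N Q S M0 P H y V0 V c Phi psi delta) /\
    (argmin_set (@F_obj R N Q S M0 P H y V0 V c Phi psi delta) !=set0 /\
     compact (argmin_set (@F_obj R N Q S M0 P H y V0 V c Phi psi delta))).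
Proof.
move=> _ _ _ _ _ cPhi coPhi hpsi hker delta d0.
have cpsi s : continuous (psi delta s) by case: (hpsi delta d0 s).
have psi0 s t : 0 <= psi delta s t by case: (hpsi delta d0 s) => _; apply.
set F := F_obj _ _ _ _ _ _ _ _.
have Fcont : continuous F by apply: F_cont.
have [m hm] : exists m, forall z, m <= Phi z.
  have [r0 hr0] := coPhi 0.
  pose Bz := [set z : 'cV[R]_Q | `|z| <= `|r0|].
  have cB : compact Bz.
    apply: (@compact_cV _ _ _ `|r0|) => //.
    change (closed ((@Num.norm _ 'cV[R]_Q) @^-1` [set t : R | t <= `|r0|])).
    apply: preimage_closed; last exact: closed_le.
    by move=> x _; apply: norm_continuous.
  have ne : Bz !=set0 by exists 0; rewrite /Bz /= normr0.
  have [c0 _ hc] := compact_EVT_min ne cB (continuous_subspaceT (A:=Bz) cPhi).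
  exists (Num.min (Phi c0) 0) => z.
  case: (leP `|z| `|r0|) => hz.
    by rewrite ge_min hc ?inE.
  rewrite ge_min; apply/orP; right; apply: ltW; apply: hr0.
  apply: (le_lt_trans (ler_norm r0)); apply: (lt_le_trans hz).
  exact: mx_le_enorm.
have Fge x : Phi (H *m x - y) + `|V0 *m x| ^+ 2 <= F x.
  rewrite /F /F_obj -addrA lerD2l -[X in X <= _]add0r lerD //.
    by apply: sumr_ge0 => s _; apply: psi0.
  rewrite lerXn2r ?nnegrE ?enorm_ge0 //; exact: mx_le_enorm.
have Fco : coercive F.
  move=> M.
  have [r1 hr1] := coPhi M.
  have [K [K0 hK]] := left_inv H V0 hker.
  pose t := Num.max (M - m) 1.
  pose a := `|y| + `|r1|.
  exists (N%:R * K * (a + t)) => x hx.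
  have sq0 := sqr_ge0 (`|V0 *m x|).
  have fx := Fge x.
  case: (ltP a `|H *m x|) => ha.
    have : M < Phi (H *m x - y).
      apply: hr1; apply: (lt_le_trans _ (mx_le_enorm _)).
      have := ler_normD (H *m x - y) y; rewrite subrK => hh.
      have := ler_norm r1; rewrite /a in ha; lra.
    lra.
  case: (ltP t `|V0 *m x|) => ht.
    have t1 : 1 <= t by rewrite /t le_max lexx orbT.
    have tM : M - m <= t by rewrite /t le_max lexx.
    have : `|V0 *m x| <= `|V0 *m x| ^+ 2.
      by rewrite expr2 ler_peMl // ltW // (le_lt_trans t1).
    have := hm (H *m x - y); lra.
  exfalso; move: hx; apply/negP; rewrite -leNgt.
  apply: (le_trans (enorm_le_mx x)); rewrite -mulrA ler_wpM2l //.
  apply: (le_trans (hK x)); apply: ler_wpM2l => //; lra.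
split => //.
have [r hr] := Fco (F 0).
pose Sub := [set x | F x <= F 0].
have Sb x : F x <= F 0 -> `|x| <= `|r|.
  move=> hx; rewrite leNgt; apply/negP => hlt.
  have : F 0 < F x.
    apply: hr; apply: (le_lt_trans (ler_norm r)); apply: (lt_le_trans hlt).
    exact: mx_le_enorm.
  lra.
have cS : compact Sub.
  apply: (@compact_cV _ _ _ `|r|) => //.
  change (closed (F @^-1` [set t : R | t <= F 0])).
  by apply: preimage_closed; [move=> x _; apply: Fcont | exact: closed_le].
have ne : Sub !=set0 by exists 0; rewrite /Sub /=.
have [c0 cS0 hc] := compact_EVT_min ne cS (continuous_subspaceT (A:=Sub) Fcont).
have c0S : F c0 <= F 0 by move: cS0; rewrite inE.
have hmin z : F c0 <= F z.
  case: (leP (F z) (F 0)) => h; first by apply: hc; rewrite inE.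
  lra.
have -> : argmin_set F = [set x | F x <= F c0].
  apply/seteqP; split => x /=; first by apply.
  by move=> h z; apply: (le_trans h).
split; first by exists c0 => /=.
apply: (@compact_cV _ _ _ `|r|).
  by move=> x /= h; apply: Sb; apply: (le_trans h).
change (closed (F @^-1` [set t : R | t <= F c0])).
by apply: preimage_closed; [move=> x _; apply: Fcont | exact: closed_le].
Qed.
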